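(* Consider the $l$-th cycle of RPF-SFISTA and assume $\mu=\mu_{l-1}\in(0,\bar\mu]$. For $j\ge0$ and $x\in\mathcal H$ let $\sigma_j(x):=A_j[\phi(y_j)-\phi(x)]+\frac{\tau_j}{2}\|x-x_j\|^2$. Then for every iteration index $j\ge1$ generated in this cycle and every $x\in\mathcal H$, $$\sigma_{j-1}(x)-\sigma_j(x)\ \ge\ \frac{\chi A_jL_j}{2}\|y_j-\tilde x_{j-1}\|^2.$$
   Context: Setup. Let $f:\mathbb R^n\to\mathbb R$ be convex and differentiable with $\|\nabla f(z')-\nabla f(z)\|\le\bar L\|z'-z\|$ for all $z,z'\in\mathbb R^n$ (some $\bar L\ge0$). Let $h:\mathbb R^n\to(-\infty,\infty]$ be proper, lower semicontinuous and convex with domain $\mathcal H$. Let $\phi:=f+h$ be $\bar\mu$-strongly convex for some $\bar\mu>0$. Write $\ell_f(u;x):=f(x)+\langle\nabla f(x),u-x\rangle$. RPF-SFISTA. Parameters $\chi\in(0,1)$, $\beta>1$; inputs $\mu_0>0$, $\bar M_0>0$, $z_0\in\mathcal H$, $\hat\epsilon>0$. The method runs in cycles $l=1,2,\dots$. At the start of cycle $l$: choose $\underline M_l\in[\max\{\bar M_{l-1}/4,\bar M_0\},\bar M_{l-1}]$ (so $\underline M_1=\bar M_0$), set $\mu:=\mu_{l-1}$, $x_0:=z_{l-1}$, $\xi_0:=y_0:=x_0$, $A_0:=0$, $\tau_0:=1$, $L_0:=\underline M_l$. Then for $j=1,2,\dots$: (i) set $L_j:=L_{j-1}$; (ii) compute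 $a_{j-1}=\frac{\tau_{j-1}+\sqrt{\tau_{j-1}^2+4\tau_{j-1}A_{j-1}L_j}}{2L_j}$, $\tilde x_{j-1}=\frac{A_{j-1}y_{j-1}+a_{j-1}x_{j-1}}{A_{j-1}+a_{j-1}}$, $y_j=\arg\min_{u}\{\ell_f(u;\tilde x_{j-1})+h(u)+\frac{L_j}{2}\|u-\tilde x_{j-1}\|^2\}$; if $f(y_j)\le\ell_f(y_j;\tilde x_{j-1})+\frac{(1-\chi)L_j}{4}\|y_j-\tilde x_{j-1}\|^2$ go to (iii), otherwise replace $L_j$ by $\beta L_j$ and repeat (ii); (iii) set $\xi_j:=y_j$ if $\phi(y_j)\le\phi(\xi_{j-1})$ and $\xi_j:=\xi_{j-1}$ otherwise; $A_j:=A_{j-1}+a_{j-1}$; $\tau_j:=\tau_{j-1}+a_{j-1}\mu/2$; $s_j:=L_j(\tilde x_{j-1}-y_j)$; $x_j:=\tau_j^{-1}[\mu a_{j-1}y_j/2+\tau_{j-1}x_{j-1}-a_{j-1}s_j]$; $v_j:=\nabla f(y_j)-\nabla f(\tilde x_{j-1})+s_j$; (iv) if $\|\xi_j-x_0\|^2<\chi A_jL_j\|y_j-\tilde x_{j-1}\|^2$, the cycle ends with a restart: set $z_l:=\xi_j$, $\bar M_l:=L_j$, $\mu_l:=\mu/2$ and start cycle $l+1$; (v) otherwise, if $\|v_j\|\le\hat\epsilon$, stop and output $(y,v,\xi,L):=(y_j,v_j,\xi_j,L_j)$; else go to iteration $j+1$. In these formulas $L_j$, $a_{j-1}$, $\tilde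 x_{j-1}$, $y_j$ denote the final (accepted) values after the line search in (ii). *)

(* Defs.v *)
From HB Require Import structures.
From mathcomp Require Import all_boot all_order all_algebra.
From mathcomp Require Import all_classical all_reals all_analysis.
Set Implicit Arguments. Unset Strict Implicit. Unset Printing Implicit Defensive.
Import Order.TTheory GRing.Theory Num.Theory.
Import numFieldNormedType.Exports.
Local Open Scope ring_scope.

Section Defs.
Variables (R : realType) (n : nat).
Notation vec := 'rV[R]_n.

Definition dotv (u v : vec) : R := \sum_(i < n) u 0 i * v 0 i.
Definition nrm (u : vec) : R := Num.sqrt (dotv u u).

Definition has_gradient (f : vec -> R) (g : vec -> vec) (x : vec) : Prop :=
  forall eps : R, 0 < eps -> exists2 delta : R, 0 < delta &
    forall d : vec, nrm d < delta ->
      `| f (x + d) - f x - dotv (g x) d | <= eps * nrm d.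

Definition convex_fun (f : vec -> R) : Prop :=
  forall (x y : vec) (t : R), 0 < t < 1 ->
    f (t *: x + (1 - t) *: y) <= t * f x + (1 - t) * f y.

Definition econvex_fun (h : vec -> \bar R) : Prop :=
  forall (x y : vec) (t : R), 0 < t < 1 ->
    (h (t *: x + (1 - t) *: y)%R <= t%:E * h x + (1 - t)%:E * h y)%E.

Definition eproper (h : vec -> \bar R) : Prop :=
  (forall x, h x != -oo%E) /\ exists x, h x \is a fin_num.

Definition edom (h : vec -> \bar R) : set vec := [set x | (h x < +oo)%E].

Definition estrongly_convex (mu : R) (p : vec -> \bar R) : Prop :=
  forall (x y : vec) (t : R), 0 < t < 1 ->
    (p (t *: x + (1 - t) *: y)%R + (mu / 2 * t * (1 - t) * nrm (x - y) ^+ 2)%:E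
       <= t%:E * p x + (1 - t)%:E * p y)%E.

Definition phi_of (f : vec -> R) (h : vec -> \bar R) (x : vec) : \bar R :=
  ((f x)%:E + h x)%E.

Definition lin_f (f : vec -> R) (g : vec -> vec) (u x : vec) : R :=
  f x + dotv (g x) (u - x).

Definition a_of (tau A L : R) : R :=
  (tau + Num.sqrt (tau ^+ 2 + 4 * tau * A * L)) / (2 * L).
Definition xt_of (A a : R) (y x : vec) : vec :=
  (A + a)^-1 *: (A *: y + a *: x).

Definition prox_pt (f : vec -> R) (g : vec -> vec) (h : vec -> \bar R)
    (L : R) (xt y : vec) : Prop :=
  forall u : vec,
    ((lin_f f g y xt + L / 2 * nrm (y - xt) ^+ 2)%:E + h y
      <= (lin_f f g u xt + L / 2 * nrm (u - xt) ^+ 2)%:E + h u)%E.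

Definition ls_ok (f : vec -> R) (g : vec -> vec) (chi L : R) (xt y : vec) : Prop :=
  f y <= lin_f f g y xt + (1 - chi) * L / 4 * nrm (y - xt) ^+ 2.

Definition ls_rejected (f : vec -> R) (g : vec -> vec) (h : vec -> \bar R)
    (chi tau A L : R) (yprev xprev : vec) : Prop :=
  forall yy : vec,
    prox_pt f g h L (xt_of A (a_of tau A L) yprev xprev) yy ->
    ~ ls_ok f g chi L (xt_of A (a_of tau A L) yprev xprev) yy.

Definition sigma_of (f : vec -> R) (h : vec -> \bar R) (A tau : R) (y x z : vec)
    : \bar R :=
  (A%:E * (phi_of f h y - phi_of f h z) + (tau / 2 * nrm (z - x) ^+ 2)%:E)%E.

End Defs.

(* Main.v *)
Require Import Defs.
From HB Require Import structures.
From mathcomp Require Import all_boot all_order all_algebra.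
From mathcomp Require Import all_classical all_reals all_analysis.
From mathcomp Require Import ring lra.
Import Order.TTheory GRing.Theory Num.Theory.
Import numFieldNormedType.Exports.
Local Open Scope ring_scope.

Ltac coordeq := apply/eqP; rewrite -subr_eq0; apply/eqP;
  rewrite /dotv ?opprD ?opprK ?mulr_sumr -?sumrN -?big_split /=; apply: big1 => i _; rewrite !mxE.

Section V.
Variables (R : realType) (n : nat).
Notation vec := 'rV[R]_n.

Lemma V1 (z xp yp y' : vec) (Ap a L' : R) : Ap + a != 0 ->
  let xt := (Ap + a)^-1 *: (Ap *: yp + a *: xp) in
  let s := L' *: (xt - y') in
  Ap * dotv s (yp - y') + a * dotv s (z - y')
  = (Ap + a) * L' * dotv (y' - xt) (y' - xt) + a * dotv s (z - xp).
Proof. move=> H xt s; rewrite /s /xt; coordeq; field => //. Qed.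

Lemma Vs (xt y' : vec) (L' : R) :
  dotv (L' *: (xt - y')) (L' *: (xt - y')) = L'^+2 * dotv (y' - xt) (y' - xt).
Proof. coordeq; ring. Qed.

Lemma Vlin (c u y' xt : vec) (t : R) :
  dotv c (t *: u + (1 - t) *: y' - xt) = t * dotv c (u - xt) + (1-t) * dotv c (y' - xt).
Proof. coordeq; ring. Qed.

Lemma Vquad (u y' xt : vec) (t : R) :
  dotv (t *: u + (1 - t) *: y' - xt) (t *: u + (1 - t) *: y' - xt)
  = dotv (y' - xt) (y' - xt) + 2 * t * dotv (y' - xt) (u - y') + t^+2 * dotv (u - y') (u - y').
Proof. coordeq; ring. Qed.

Lemma Vhalf (s u y' : vec) :
  dotv s (2^-1 *: u + (1 - 2^-1) *: y' - y') = 2^-1 * dotv s (u - y').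
Proof. coordeq; ring. Qed.

Lemma VZ (c d : vec) (t : R) : dotv c (t *: d) = t * dotv c d.
Proof. coordeq; ring. Qed.

Lemma VZZ (d : vec) (t : R) : dotv (t *: d) (t *: d) = t^+2 * dotv d d.
Proof. coordeq; ring. Qed.

Lemma Vdiff (c u y' xt : vec) :
  dotv c (u - xt) - dotv c (y' - xt) = dotv c (u - y').
Proof. coordeq; ring. Qed.

Lemma Vsy (xt y' u : vec) (L' : R) :
  dotv (L' *: (xt - y')) (u - y') = - (L' * dotv (y' - xt) (u - y')).
Proof. coordeq; ring. Qed.

Lemma Vconv (w x : vec) (t : R) : t *: w + (1 - t) *: x = x + t *: (w - x).
Proof. apply/rowP => i; rewrite !mxE; ring. Qed.
Lemma dotv_ge0 (u : vec) : 0 <= dotv u u.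
Proof. by apply: sumr_ge0 => i _; rewrite -expr2 sqr_ge0. Qed.

Lemma nrm_sq (u : vec) : nrm u ^+ 2 = dotv u u.
Proof. by rewrite /nrm sqr_sqrtr // dotv_ge0. Qed.

Lemma V2 (z xp y' s : vec) (tp al a : R) : 0 < tp -> 0 <= al ->
  - (a^+2 * dotv s s / (2*tp)) <= tp/2 * dotv (z-xp)(z-xp) + a * dotv s (z - xp)
    + al/2 * dotv (z-y')(z-y')
    - (tp+al)/2 * dotv (z - (tp+al)^-1 *: (al *: y' + tp *: xp - a *: s))
                       (z - (tp+al)^-1 *: (al *: y' + tp *: xp - a *: s)).
Proof.
move=> tp0 al0.
rewrite -subr_ge0.
have -> : forall E, E - - (a^+2 * dotv s s / (2*tp)) = E + (a^+2 / (2*tp)) * dotv s s.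
  by move=> E; rewrite opprK mulrAC.
rewrite /dotv !mulr_sumr -sumrN -!big_split /=.
apply: sumr_ge0 => i _; rewrite !mxE.
set Z := z 0 i; set X := xp 0 i; set Y := y' 0 i; set S := s 0 i.
have tal : tp + al != 0 by apply/lt0r_neq0; lra.
have -> : tp / 2 * ((Z - X) * (Z - X)) + a * (S * (Z - X)) + al / 2 * ((Z - Y) * (Z - Y)) -
  (tp + al) / 2 * ((Z - (tp + al)^-1 * (al * Y + tp * X - a * S)) * (Z - (tp + al)^-1 * (al * Y + tp * X - a * S))) +
  a ^+ 2 / (2 * tp) * (S * S) = al / (2 * tp * (tp+al)) * (tp * (Y - X) + a * S)^+2.
  by field; apply/andP; split => //; apply/lt0r_neq0.
apply: mulr_ge0; last exact: sqr_ge0.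
apply: divr_ge0 => //; apply: mulr_ge0; lra.
Qed.
End V.

Section A.
Variables (R : realType) (n : nat).
Notation vec := 'rV[R]_n.

Lemma lim0 (X c : R) : 0 <= c -> (forall t, 0 < t < 1 -> - (c * t) <= X) -> 0 <= X.
Proof.
move=> c0 H; rewrite leNgt; apply/negP => X0.
have t0 : 0 < - X / (- X + c + 1) by apply: divr_gt0; lra.
have t1 : - X / (- X + c + 1) < 1 by rewrite ltr_pdivrMr; lra.
have := H _ (andb_true_intro (conj t0 t1)).
have -> : c * (- X / (- X + c + 1)) = (-X) * (c / (-X + c + 1)) by rewrite mulrCA mulrA.
have : c / (- X + c + 1) < 1 by rewrite ltr_pdivrMr; lra.
move=> h1 h2; nra.
Qed.

Lemma nrmZ (d : vec) (t : R) : 0 <= t -> nrm (t *: d) = t * nrm d.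
Proof.
move=> t0; rewrite /nrm VZZ sqrtrM ?sqr_ge0 // sqrtr_sqr ger0_norm //.
Qed.

Lemma nrm_ge0 (d : vec) : 0 <= nrm d.
Proof. exact: sqrtr_ge0. Qed.

Lemma grad_ineq (f : vec -> R) g : (forall z, has_gradient f g z) -> convex_fun f ->
  forall w x, f x + dotv (g x) (w - x) <= f w.
Proof.
move=> hg cf w x; rewrite leNgt; apply/negP => H.
set G := dotv (g x) (w - x) in H.
set gap := f x + G - f w.
have gap0 : 0 < gap by rewrite /gap; lra.
set D := nrm (w - x).
have D0 : 0 <= D := nrm_ge0 _.
have eps0 : 0 < gap / (2 * (D + 1)) by apply: divr_gt0 => //; lra.
have [del del0 Hd] := hg x _ eps0.
set t := del / (2 * (del + D)).
have t0 : 0 < t by apply: divr_gt0 => //; lra.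
have t1 : t < 1 by rewrite /t ltr_pdivrMr; lra.
have tD : nrm (t *: (w - x)) < del.
  rewrite (nrmZ _ _ (ltW t0)) -/D /t mulrAC ltr_pdivrMr; nra.
have := Hd _ tD; rewrite (nrmZ _ _ (ltW t0)) -/D VZ -/G.
have := cf w x t (andb_true_intro (conj t0 t1)); rewrite Vconv.
set F := f (x + t *: (w - x)).
move=> Hc /ler_normlP [Ha _].
have e1 : gap / (2 * (D + 1)) * D <= gap / 2.
  rewrite mulrAC ler_pdivrMr; last lra.
  have -> : gap / 2 * (2 * (D + 1)) = gap * (D + 1) by field.
  nra.
have e2 : gap / (2 * (D + 1)) * (t * D) <= t * (gap / 2).
  by rewrite mulrCA ler_wpM2l // ltW.
have tg : 0 < t * gap by apply: mulr_gt0.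
have eg : t * gap = t * f x + t * G - t * f w by rewrite /gap; ring.
have eh : (1 - t) * f x = f x - t * f x by ring.
have eg2 : t * (gap / 2) = (t * gap) / 2 by ring.
rewrite eh in Hc; rewrite eg2 in e2.
set E := gap / (2 * (D + 1)) * (t * D) in Ha e2.
lra.
Qed.

End A.

Section B.
Variables (R : realType) (n : nat).
Notation vec := 'rV[R]_n.
Local Open Scope ereal_scope.

Lemma fin_le (x : \bar R) (r : R) : x != -oo -> x <= r%:E -> x \is a fin_num.
Proof. by case: x. Qed.

Local Close Scope ereal_scope.

Lemma prox_sub (f : vec -> R) g h L xt y' u : 0 < L -> econvex_fun h ->
  (forall x, h x != -oo%E) -> prox_pt f g h L xt y' ->
  h y' \is a fin_num -> h u \is a fin_num ->
  lin_f f g y' xt + fine (h y') + dotv (L *: (xt - y')) (u - y')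
    <= lin_f f g u xt + fine (h u).
Proof.
move=> L0 hconv hno prox fy fu.
rewrite -subr_ge0.
apply: (@lim0 _ _ (L / 2 * dotv (u - y') (u - y'))).
  by apply: mulr_ge0; [lra | exact: dotv_ge0].
move=> t /andP[t0 t1].
have hc := hconv u y' t (andb_true_intro (conj t0 t1)).
set w := t *: u + (1 - t) *: y' in hc.
rewrite -(fineK fu) -(fineK fy) -!EFinM -EFinD in hc.
have fw := fin_le _ _ (hno w) hc.
have hp := prox w.
rewrite -(fineK fw) -(fineK fy) -!EFinD lee_fin in hp.
rewrite -(fineK fw) lee_fin in hc.
rewrite /lin_f !nrm_sq /w Vquad Vlin in hp.
rewrite /lin_f Vsy.
set Hu := fine (h u) in hc *; set Hy := fine (h y') in hc hp *;
set Hw := fine (h w) in hc hp.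
set gu := dotv (g xt) (u - xt) in hp *; set gy := dotv (g xt) (y' - xt) in hp *.
set q := dotv (y' - xt) (u - y') in hp *; set r := dotv (u - y') (u - y') in hp *.
set d := dotv (y' - xt) (y' - xt) in hp.
set X := _ - _.
clearbody Hu Hy Hw gu gy q r d.
have eX : X = gu + Hu - gy - Hy + L * q by rewrite /X; lra.
have : 0 <= t * (X + L / 2 * r * t).
  rewrite eX.
  lra.
rewrite pmulr_rge0 //; lra.
Qed.


Lemma keyK (f : vec -> R) g h L chi mubar xt y' u :
  (forall z, has_gradient f g z) -> convex_fun f -> 0 < L -> econvex_fun h ->
  (forall x, h x != -oo%E) -> estrongly_convex mubar (phi_of f h) ->
  prox_pt f g h L xt y' -> ls_ok f g chi L xt y' ->
  h y' \is a fin_num -> h u \is a fin_num ->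
  f y' + fine (h y') + dotv (L *: (xt - y')) (u - y')
    + mubar / 4 * dotv (u - y') (u - y')
    - (1 - chi) * L / 2 * dotv (y' - xt) (y' - xt) <= f u + fine (h u).
Proof.
move=> hg cf L0 hconv hno hsc prox ls fy fu.
have h2 : 0 < (2^-1 : R) < 1 by apply/andP; split; lra.
have sc := hsc u y' _ h2.
set w := 2^-1 *: u + (1 - 2^-1) *: y' in sc.
rewrite /phi_of -(fineK fu) -(fineK fy) -!EFinD in sc.
have fw : h w \is a fin_num.
  rewrite fin_numE hno /=; apply/negP => /eqP hw.
  by rewrite hw addey // addye // leye_eq in sc.
rewrite -(fineK fw) -!EFinD lee_fin in sc.
have gi := @grad_ineq R n f g hg cf w xt.
have ps := @prox_sub f g h L xt y' w L0 hconv hno prox fy fw.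
rewrite /w Vhalf -/w in ps.
move: ls; rewrite /ls_ok => ls.
rewrite /lin_f in ps ls.
rewrite !nrm_sq in sc ls.
lra.
Qed.

End B.

Section C.
Variables (R : realType) (n : nat).
Notation vec := 'rV[R]_n.

Lemma a_of_pos (tau A L : R) : 0 < tau -> 0 <= A -> 0 < L -> 0 < a_of tau A L.
Proof.
move=> t0 A0 L0; rewrite /a_of; apply: divr_gt0; last lra.
have := sqrtr_ge0 (tau ^+ 2 + 4 * tau * A * L); lra.
Qed.

Lemma a_of_eq (tau A L : R) : 0 < tau -> 0 <= A -> 0 < L ->
  a_of tau A L ^+ 2 * L = tau * (A + a_of tau A L).
Proof.
move=> t0 A0 L0; rewrite /a_of.
set S := Num.sqrt _.
have eS : S ^+ 2 = tau ^+ 2 + 4 * tau * A * L.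
  rewrite sqr_sqrtr //; apply: addr_ge0; first exact: sqr_ge0.
  have h4 : (0 : R) <= 4 by lra.
  exact: (mulr_ge0 (mulr_ge0 (mulr_ge0 h4 (ltW t0)) A0) (ltW L0)).
apply/eqP; rewrite -subr_eq0; apply/eqP.
have L2 : L != 0 by apply/lt0r_neq0.
have -> : ((tau + S) / (2 * L)) ^+ 2 * L - tau * (A + (tau + S) / (2 * L))
  = (S ^+ 2 - (tau ^+ 2 + 4 * tau * A * L)) / (4 * L) by field.
by rewrite eS subrr mul0r.
Qed.

Lemma prox_fin (f : vec -> R) g h L xt y : eproper h -> prox_pt f g h L xt y ->
  h y \is a fin_num.
Proof.
move=> [hno [u0 fu0]] prox; have := prox u0.
rewrite -(fineK fu0) -EFinD => H.
rewrite fin_numE hno /=; apply/negP => /eqP hy.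
by rewrite hy addey // leye_eq in H.
Qed.

Lemma edom_fin (h : vec -> \bar R) z : eproper h -> edom h z -> h z \is a fin_num.
Proof.
move=> [hno _] hz; rewrite fin_numE hno /=.
by rewrite (lt_eqF hz).
Qed.

Lemma phiE (f : vec -> R) h u : h u \is a fin_num ->
  phi_of f h u = (f u + fine (h u))%:E.
Proof. by move=> fu; rewrite /phi_of -(fineK fu). Qed.

Lemma sigmaE (f : vec -> R) h A tau y x z : h y \is a fin_num -> h z \is a fin_num ->
  sigma_of f h A tau y x z
  = (A * ((f y + fine (h y)) - (f z + fine (h z))) + tau / 2 * nrm (z - x) ^+ 2)%:E.
Proof.
move=> fy fz; rewrite /sigma_of (phiE f _ _ fy) (phiE f _ _ fz).
by rewrite -EFinB -EFinM -EFinD.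
Qed.

End C.

Arguments prox_fin {R n f g h L xt y}.
Arguments edom_fin {R n h z}.
Arguments keyK {R n f g h L chi mubar xt y'} u.
Arguments V1 {R n} z xp yp y' {Ap a} L'.
Arguments V2 {R n} z xp y' s {tp al} a.
Arguments sigmaE {R n f h A tau y x z}.
Arguments dotv_ge0 {R n}.

(* One cycle of RPF-SFISTA: the cycle starts at x0 = z_{l-1} with
   mu = mu_{l-1} and L_0 = underline M_l; iterations j = 1, ..., J are
   generated (the cycle neither restarted nor stopped at any j < J). *)
Theorem lemmaA6 (R : realType) (n : nat)
    (f : 'rV[R]_n -> R) (g : 'rV[R]_n -> 'rV[R]_n) (h : 'rV[R]_n -> \bar R)
    (Lbar mubar chi beta epshat : R)
    (mu L0 : R) (x0 : 'rV[R]_n) (J : nat)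
    (A tau a L : nat -> R) (x y xi xt s v : nat -> 'rV[R]_n) :
  (* assumptions on f, h, phi *)
  (forall z, has_gradient f g z) ->
  0 <= Lbar ->
  (forall z z', nrm (g z' - g z) <= Lbar * nrm (z' - z)) ->
  convex_fun f ->
  eproper h -> lower_semicontinuous h -> econvex_fun h ->
  0 < mubar -> estrongly_convex mubar (phi_of f h) ->
  (* parameters and inputs *)
  0 < chi < 1 -> 1 < beta -> 0 < epshat ->
  (* cycle data *)
  0 < mu <= mubar -> edom h x0 -> 0 < L0 ->
  x 0%N = x0 -> xi 0%N = x0 -> y 0%N = x0 -> A 0%N = 0 -> tau 0%N = 1 ->
  L 0%N = L0 ->
  (* iteration j.+1 of the cycle, for j.+1 <= J *)
  (forall j : nat, (j < J)%N ->
     [/\ (exists k : nat, L j.+1 = beta ^+ k * L j /\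
            forall i : nat, (i < k)%N ->
              ls_rejected f g h chi (tau j) (A j) (beta ^+ i * L j) (y j) (x j)),
         a j = a_of (tau j) (A j) (L j.+1) &
         xt j = xt_of (A j) (a j) (y j) (x j)] /\
     [/\ prox_pt f g h (L j.+1) (xt j) (y j.+1),
         ls_ok f g chi (L j.+1) (xt j) (y j.+1) &
         xi j.+1 = (if (phi_of f h (y j.+1) <= phi_of f h (xi j))%E
                    then y j.+1 else xi j)] /\
     [/\ A j.+1 = A j + a j,
         tau j.+1 = tau j + a j * mu / 2,
         s j.+1 = L j.+1 *: (xt j - y j.+1),
         x j.+1 = (tau j.+1)^-1 *:
                    ((mu * a j / 2) *: y j.+1 + tau j *: x j - a j *: s j.+1) &
         v j.+1 = g (y j.+1) - g (xt j) + s j.+1]) ->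
  (* neither the restart test (iv) nor the stopping test (v) fired before J *)
  (forall j : nat, (0 < j < J)%N ->
     ~ (nrm (xi j - x0) ^+ 2 < chi * A j * L j * nrm (y j - xt j.-1) ^+ 2) /\
     ~ (nrm (v j) <= epshat)) ->
  forall j : nat, (j < J)%N ->
  forall z : 'rV[R]_n, edom h z ->
    ((chi * A j.+1 * L j.+1 / 2 * nrm (y j.+1 - xt j) ^+ 2)%:E
      <= sigma_of f h (A j) (tau j) (y j) (x j) z
         - sigma_of f h (A j.+1) (tau j.+1) (y j.+1) (x j.+1) z)%E.
Proof.
Proof.
move=> hg Lb0 hLip cf hprop hlsc hconv mub0 hsc hchi hbeta heps hmu hx0 hL0
  ex0 exi0 ey0 eA0 et0 eL0 Hstep Hnot.
have hno : forall u, h u != -oo%E by case: hprop.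
have inv : forall j, (j <= J)%N -> [/\ 0 < tau j, 0 <= A j & 0 < L j].
  elim=> [_ | j IH hj]; first by rewrite et0 eA0 eL0; split => //; lra.
  have hj' : (j < J)%N by [].
  have [t0 A0 Lj0] := IH (ltnW hj').
  have [[[k [HL _]] Ha _] [_ [HA Ht _ _ _]]] := Hstep j hj'.
  have Lp : 0 < L j.+1.
    by rewrite HL; apply: mulr_gt0 => //; apply: exprn_gt0; lra.
  have ap : 0 < a j by rewrite Ha; apply: a_of_pos.
  have mp : 0 < a j * mu / 2.
    by apply: divr_gt0; [apply: mulr_gt0 => //; case/andP: hmu | lra].
  by rewrite HA Ht; split; lra.
have finy : forall j, (j <= J)%N -> h (y j) \is a fin_num.
  case=> [_ | j hj]; first by rewrite ey0; exact: edom_fin.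
  have [_ [[Hp _ _] _]] := Hstep j hj.
  exact: prox_fin hprop Hp.
move=> j hj z hz.
have fz := edom_fin hprop hz.
have [t0 A0 Lj0] := inv j (ltnW hj).
have [_ _ Lp] := inv j.+1 hj.
have [[[k [HL _]] Ha Hxt] [[Hp Hls _] [HA Ht Hs Hx _]]] := Hstep j hj.
have ap : 0 < a j by rewrite Ha; apply: a_of_pos.
have eaL : a j ^+ 2 * L j.+1 = tau j * (A j + a j) by rewrite Ha a_of_eq.
have fyj := finy j (ltnW hj).
have fyj1 := finy j.+1 hj.
rewrite (sigmaE fyj fz) (sigmaE fyj1 fz) -EFinB lee_fin.
have k1 := keyK (y j) hg cf Lp hconv hno hsc Hp Hls fyj1 fyj.
have k2 := keyK z hg cf Lp hconv hno hsc Hp Hls fyj1 fz.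
rewrite -Hs in k1 k2.
have Ap' : A j + a j != 0 by apply/lt0r_neq0; lra.
have v1 := V1 z (x j) (y j) (y j.+1) (L j.+1) Ap'.
rewrite /= -/(xt_of (A j) (a j) (y j) (x j)) -Hxt -Hs in v1.
have [mu0 mule] := andP hmu.
have al0 : 0 <= mu * a j / 2.
  by apply: divr_ge0; [apply: mulr_ge0; lra | lra].
have v2 := V2 z (x j) (y j.+1) (s j.+1) (a j) t0 al0.
have eal : tau j + mu * a j / 2 = tau j.+1 by rewrite Ht; ring.
rewrite eal -Hx in v2.
have vs : dotv (s j.+1) (s j.+1) = L j.+1 ^+ 2 * dotv (y j.+1 - xt j) (y j.+1 - xt j).
  by rewrite Hs Vs.
have e3 : a j ^+ 2 * dotv (s j.+1) (s j.+1) / (2 * tau j)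
   = (A j + a j) * L j.+1 * dotv (y j.+1 - xt j) (y j.+1 - xt j) / 2.
  rewrite vs.
  have -> : a j ^+ 2 * (L j.+1 ^+ 2 * dotv (y j.+1 - xt j) (y j.+1 - xt j)) / (2 * tau j)
    = (a j ^+ 2 * L j.+1) * L j.+1 * dotv (y j.+1 - xt j) (y j.+1 - xt j) / (2 * tau j) by ring.
  rewrite eaL; field; apply/lt0r_neq0; lra.
rewrite e3 in v2.
rewrite HA !nrm_sq.
set d := dotv (y j.+1 - xt j) (y j.+1 - xt j) in k1 k2 v1 v2 *.
set r1 := dotv (y j - y j.+1) (y j - y j.+1) in k1.
set r2 := dotv (z - y j.+1) (z - y j.+1) in k2 v2.
have r10 : 0 <= r1 := dotv_ge0 _.
have r20 : 0 <= r2 := dotv_ge0 _.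
have m1 : a j * (mu / 4 * r2) <= a j * (mubar / 4 * r2).
  apply: ler_wpM2l; first lra.
  apply: ler_wpM2r => //; lra.
have m2 : 0 <= A j * (mubar / 4 * r1).
  by apply: mulr_ge0 => //; apply: mulr_ge0 => //; lra.
have k1' := ler_wpM2l A0 k1.
have k2' := ler_wpM2l (ltW ap) k2.
lra.
Qed.
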